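(* Let $h(x)=\mathrm{ReLU}(\Gamma^*W^*x+\beta^* )$ be any one-layer ReLU network with $x\in\mathbb{R}^d$, $W^*\in\mathbb{R}^{d\times d}$, $\Gamma^*\in\mathbb{R}^{d\times d}$ diagonal, and $\beta^*\in\mathbb{R}^d$. Consider the two-layer network with batch normalization $$f(x)=\mathrm{ReLU}\Big(\Gamma'\,\frac{V\,\mathrm{ReLU}\big(\Gamma\frac{Wx-\mu}{s}+\beta\big)-\mu'}{s'}+\beta'\Big).$$ Its parameters are: - frozen: $W\in\mathbb{R}^{d^2\times d}$ and $V\in\mathbb{R}^{d\times d^2}$ random; $\mu\in\mathbb{R}^{d^2}$, $\mu'\in\mathbb{R}^d$ and nonzero scalars $s,s'$ fixed; - tunable: diagonal $\Gamma\in\mathbb{R}^{d^2\times d^2}$, $\Gamma'\in\mathbb{R}^{d\times d}$, and vectors $\beta\in\mathbb{R}^{d^2}$, $\beta'\in\mathbb{R}^d$. Then, with probability $1$ over the draw of $W$ and $V$, there exist $\Gamma,\beta,\Gamma',\beta'$ such that $f(x)=h(x)$ for all $x\in\mathbb{R}^d$ with $\|x\|_2\le1$.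
   Context: $\mathrm{ReLU}(t)=\max(t,0)$ is applied entrywise. ''Random'' matrices have independent, identically distributed entries drawn from an arbitrary continuous and bounded distribution, independently across matrices. In $\frac{Wx-\mu}{s}$ the subtraction is of vectors and the division is by the scalar $s$ (batch statistics are treated as fixed constants). *)

(* Defs.v *)
From HB Require Import structures.
From mathcomp Require Import all_boot all_order all_algebra.
From mathcomp Require Import all_classical all_reals all_analysis.
Set Implicit Arguments. Unset Strict Implicit. Unset Printing Implicit Defensive.
Import Order.TTheory GRing.Theory Num.Theory.
Local Open Scope classical_set_scope.
Local Open Scope ring_scope.

Definition relu {R : realType} (t : R) : R := Num.max t 0.
Definition relu_mx {R : realType} m n (A : 'M[R]_(m, n)) : 'M[R]_(m, n) :=
  map_mx relu A.

Definition in_unit_ball {R : realType} d (x : 'cV[R]_d) : Prop :=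
  \sum_(i < d) x i 0 ^+ 2 <= 1.

Definition relu_layer {R : realType} d (gs : 'rV[R]_d) (Ws : 'M[R]_d)
  (bs : 'cV[R]_d) (x : 'cV[R]_d) : 'cV[R]_d :=
  relu_mx (diag_mx gs *m Ws *m x + bs).

Definition bn_net {R : realType} d
  (W : 'M[R]_(d ^ 2, d)) (V : 'M[R]_(d, d ^ 2))
  (mu : 'cV[R]_(d ^ 2)) (mu' : 'cV[R]_d) (s s' : R)
  (g : 'rV[R]_(d ^ 2)) (b : 'cV[R]_(d ^ 2)) (g' : 'rV[R]_d) (b' : 'cV[R]_d)
  (x : 'cV[R]_d) : 'cV[R]_d :=
  relu_mx (diag_mx g' *m (s'^-1 *: (V *m relu_mx (diag_mx g *m (s^-1 *: (W *m x - mu)) + b) - mu')) + b').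

Definition entry_idx (d : nat) : finType :=
  (('I_(d ^ 2) * 'I_d) + ('I_d * 'I_(d ^ 2)))%type.

Definition entry_of {R : realType} {T : Type} d
  (W : T -> 'M[R]_(d ^ 2, d)) (V : T -> 'M[R]_(d, d ^ 2))
  (j : entry_idx d) : T -> R :=
  match j with
  | inl (i, k) => fun w => W w i k
  | inr (i, k) => fun w => V w i k
  end.

Definition mutually_independent {R : realType} {dT : measure_display}
  {T : measurableType dT} (P : probability T R) (I : finType) (X : I -> T -> R) : Prop :=
  forall (J : {set I}) (B : I -> set R), (forall j, measurable (B j)) ->
    P (\bigcap_(j in [set j | j \in J]) (X j @^-1` B j)) =
    (\prod_(j in J) P (X j @^-1` B j))%E.

(* mu is a continuous (atomless) and bounded (bounded support) law on R *)
Definition continuous_bounded_law {R : realType} (mu : probability R R) : Prop :=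
  (forall t : R, mu [set t] = 0%E) /\
  (exists M : R, mu `[(- M), M]%classic = 1%E).

(* Main.v *)
Require Import Defs.
From HB Require Import structures.
From mathcomp Require Import all_boot all_order all_algebra.
From mathcomp Require Import all_classical all_reals all_analysis.
Import Order.TTheory GRing.Theory Num.Theory.
Local Open Scope classical_set_scope.
Local Open Scope ring_scope.

From mathcomp Require Import measurable_realfun.
From mathcomp Require Import ring.

Section mypush.
Local Open Scope ereal_scope.
Context d d' (T1 : measurableType d) (T2 : measurableType d') (R : realType).
Variables (m : {measure set T1 -> \bar R}) (f : T1 -> T2).

Definition mypush (mf : measurable_fun [set: T1] f) : set T2 -> \bar R :=
  fun A => m (f @^-1` A).
Variable (mf : measurable_fun [set: T1] f).
Let p0 : mypush mf set0 = 0.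
Proof. by rewrite /mypush preimage_set0 measure0. Qed.
Let p_ge0 A : 0 <= mypush mf A.
Proof. by apply: measure_ge0; rewrite -[X in measurable X]setIT; apply: mf. Qed.
Let p_sa : semi_sigma_additive (mypush mf).
Proof.
move=> F mF tF mUF; rewrite /mypush preimage_bigcup.
apply: measure_semi_sigma_additive.
- by move=> n; rewrite -[X in measurable X]setTI; exact: mf.
- apply/trivIsetP => /= i j _ _ ij; rewrite -preimage_setI.
  by move/trivIsetP : tF => /(_ _ _ _ _ ij) ->//; rewrite preimage_set0.
- by rewrite -preimage_bigcup -[X in measurable X]setTI; exact: mf.
Qed.
HB.instance Definition _ := isMeasure.Build _ _ _ (mypush mf) p0 p_ge0 p_sa.
End mypush.
Arguments mypush {d d' T1 T2 R} m {f} mf.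

Section mypushP.
Local Open Scope ereal_scope.
Context d d' (T1 : measurableType d) (T2 : measurableType d') (R : realType).
Variables (m : probability T1 R) (f : T1 -> T2) (mf : measurable_fun [set: T1] f).
Let pT : mypush m mf [set: T2] = 1.
Proof. by rewrite /mypush preimage_setT; exact: probability_setT. Qed.
HB.instance Definition _ := Measure_isProbability.Build _ _ _ (mypush m mf) pT.
End mypushP.


Definition upd {I : eqType} {R : Type} (x : I -> R) (e : I) (t : R) : I -> R :=
  fun k => if k == e then t else x k.

Definition multiaffine {R : pzRingType} {I : eqType} (F : (I -> R) -> R) :=
  forall e x, F x = (F (upd x e 0) + x e * (F (upd x e 1) - F (upd x e 0)))%R.

Definition depends {R : Type} {I : finType} (F : (I -> R) -> R) (S : {set I}) :=
  forall x y, (forall k, k \in S -> x k = y k) -> F x = F y.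

Lemma aux_ring (R : comPzRingType) (a b c d t : R) :
  (a + t * (b - a)) - (c + t * (d - c)) = (a - c) + t * ((b - d) - (a - c)).
Proof. ring. Qed.

Section ma.
Context {R : comPzRingType} {I : finType}.
Implicit Types (F : (I -> R) -> R) (x : I -> R).

Lemma upd_id x e : upd x e (x e) = x.
Proof. by apply/funext => k; rewrite /upd; case: eqP => // ->. Qed.

Lemma upd_upd x e t u : upd (upd x e t) e u = upd x e u.
Proof. by apply/funext => k; rewrite /upd; case: eqP. Qed.

Lemma upd_C x e e' t u : e != e' -> upd (upd x e t) e' u = upd (upd x e' u) e t.
Proof.
move=> ee'; apply/funext => k; rewrite /upd.
case: (k =P e') => [kE|kE]; case: (k =P e) => [kE2|kE2] //.
by move: ee'; rewrite -kE -kE2 eqxx.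
Qed.

Lemma upd_eq x e t : upd x e t e = t.
Proof. by rewrite /upd eqxx. Qed.

Lemma upd_neq x e t k : k != e -> upd x e t k = x k.
Proof. by rewrite /upd => /negbTE ->. Qed.

Lemma ma_upd {F} j c : multiaffine F -> multiaffine (fun x => F (upd x j c)).
Proof.
move=> hF e x /=.
have [->|ej] := eqVneq e j.
  by rewrite !upd_upd subrr mulr0 addr0.
have je : j != e by rewrite eq_sym.
by rewrite (hF e (upd x j c)) !(upd_C x j e _ _ je) upd_neq.
Qed.

Lemma ma_sub {F G} : multiaffine F -> multiaffine G ->
  multiaffine (fun x => F x - G x)%R.
Proof.
move=> hF hG e x /=.
have -> : F x = (F (upd x e 0) + x e * (F (upd x e 1) - F (upd x e 0)))%R by apply: hF.
have -> : G x = (G (upd x e 0) + x e * (G (upd x e 1) - G (upd x e 0)))%R by apply: hG.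
exact: aux_ring.
Qed.

Lemma dep_upd {F S} j c : depends F S -> depends (fun x => F (upd x j c)) (S :\ j).
Proof.
move=> hF x y hxy /=; apply: hF => k kS.
rewrite /upd; case: eqP => // /eqP kj; apply: hxy.
by rewrite in_setD1 kj.
Qed.

Lemma dep_sub {F G S} : depends F S -> depends G S -> depends (fun x => F x - G x)%R S.
Proof. by move=> hF hG x y h /=; rewrite (hF x y h) (hG x y h). Qed.

Lemma dep0 {F} : depends F finset.set0 -> forall x, F x = F (fun=> 0%R).
Proof. by move=> hF x; apply: hF => k; rewrite finset.in_set0. Qed.

End ma.

Section indep.
Local Open Scope ereal_scope.
Context (R : realType) (dT : measure_display) (T : measurableType dT)
  (P : probability T R) (law : probability R R) (I : finType) (X : I -> T -> R).
Hypotheses (hmeas : forall j, measurable_fun setT (X j))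
  (hdist : forall j (B : set R), measurable B -> P (X j @^-1` B) = law B)
  (hatom : forall t : R, law [set t] = 0)
  (hind : forall (J : {set I}) (B : I -> set R), (forall j, measurable (B j)) ->
    P (\bigcap_(j in [set j | j \in J]) (X j @^-1` B j)) =
    (\prod_(j in J) P (X j @^-1` B j))%E).

Definition GS (S : {set I}) : set (set T) :=
  [set E | exists B : I -> set R, (forall k, measurable (B k)) /\
     E = \bigcap_(k in [set k | k \in S]) (X k @^-1` B k)].

Lemma mX j (B : set R) : measurable B -> measurable (X j @^-1` B).
Proof. by move=> mB; rewrite -[X in measurable X]setTI; exact: hmeas. Qed.

Lemma GS_meas S : GS S `<=` measurable.
Proof.
move=> _ [B [mB ->]]; apply: fin_bigcap_measurable; first exact: finite_finset.
by move=> k _; exact: mX.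
Qed.

Lemma GS_setI S : setI_closed (GS S).
Proof.
move=> _ _ [B1 [mB1 ->]] [B2 [mB2 ->]].
exists (fun k => B1 k `&` B2 k); split; first by move=> k; exact: measurableI.
by apply/seteqP; split => w /=; [move=> [h1 h2] k Sk; split; [exact: h1|exact: h2]
  | move=> h; split => k Sk; have [] := h k Sk].
Qed.

Lemma GS_T S : GS S setT.
Proof.
exists (fun=> setT); split => //; apply/seteqP; split => w //= _ k _.
Qed.

Lemma sGS_meas S : <<s GS S >> `<=` measurable.
Proof. exact: smallest_sub (@sigma_algebra_measurable _ T) (@GS_meas S). Qed.

Lemma indep_gen (S : {set I}) (j : I) (C : set R) : j \notin S -> measurable C ->
  forall E, GS S E -> P (E `&` X j @^-1` C) = P E * law C.
Proof.
move=> jS mC _ [B [mB ->]].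
pose B' k := if k == j then C else B k.
have mB' k : measurable (B' k) by rewrite /B'; case: ifP.
have := hind (j |: S) B' mB'.
rewrite big_setU1 //= /B' eqxx.
rewrite (eq_bigr (fun k => P (X k @^-1` B k))); last first.
  by move=> k kS; case: eqP => // kj; move: jS; rewrite -kj kS.
rewrite -(hind S B mB) hdist // muleC => <-; congr (P _).
apply/seteqP; split => w /=.
- move=> [h1 h2] k; rewrite /= in_setU1 => /orP[/eqP ->|kS]; first by rewrite eqxx.
  by case: eqP => [->//|_]; exact: h1.
- move=> h; split.
  + move=> k kS; have := h k; rewrite /= in_setU1 kS orbT => /(_ isT).
    by case: eqP => // kj; move: jS; rewrite -kj kS.
  + by by have := h j; rewrite /= in_setU1 eqxx /=; apply.
Qed.

Lemma indep_sigma (S : {set I}) (j : I) (C : set R) : j \notin S -> measurable C ->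
  forall E, <<s GS S >> E -> P (E `&` X j @^-1` C) = P E * law C.
Proof.
move=> jS mC E sE.
have lf : (0 <= fine (law C))%R by apply: fine_ge0.
have lE : law C = (fine (law C))%:E.
  by rewrite fineK // fin_num_measure.
pose m1 := mrestr P (mX j C mC).
pose m2 := mscale (NngNum lf) P.
have := @g_sigma_algebra_measure_unique _ R T (GS S) (@GS_meas S) (fun=> setT)
  (fun=> GS_T S) (bigcup_const _ _) m1 m2 (GS_setI S).
have e1 A : m1 A = P (A `&` X j @^-1` C) by [].
have e2 A : m2 A = P A * law C by rewrite lE muleC.
move=> /(_ (ex_intro _ 0%N Logic.I)) h.
rewrite -e1 -e2; apply: h => //.
- by move=> A GA; exact: (etrans (e1 A) (etrans (@indep_gen S j C jS mC A GA) (esym (e2 A)))).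
- move=> _; have h1 := probability_le1 P (measurableI _ _ measurableT (mX j C mC)).
  exact: (le_lt_trans h1 (ltry _)).
Qed.

Lemma zero_step (S : {set I}) (j : I) (g : T -> R * R) : j \notin S ->
  (forall C, measurable C -> <<s GS S >> (g @^-1` C)) ->
  P.-negligible [set w | (g w).1 != 0%R /\ (X j w * (g w).1 + (g w).2 = 0)%R].
Proof.
move=> jS hg.
have mg : measurable_fun setT g.
  by move=> _ C mC; rewrite setTI; exact: sGS_meas (hg C mC).
have mh : measurable_fun setT (fun w => (g w, X j w)).
  exact: measurable_fun_pair mg (hmeas j).
pose D : set ((R * R) * R) := [set p | p.1.1 != 0%R /\ (p.2 * p.1.1 + p.1.2 = 0)%R].
have m11 : measurable_fun setT (fun p : (R * R) * R => p.1.1).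
  exact: measurableT_comp measurable_fst measurable_fst.
have mD : measurable D.
  have -> : D = ((fun p : (R * R) * R => p.1.1) @^-1` (~` [set 0%R])) `&`
     ((fun p : (R * R) * R => (p.2 * p.1.1 + p.1.2)%R) @^-1` [set 0%R]).
    by apply/seteqP; split => -[[u v] t]; rewrite /D /= => -[h1 h2]; split => //; apply/eqP.
  apply: measurableI.
    rewrite -[X in measurable X]setTI; apply: m11 => //.
    exact: measurableC (measurable_set1 _).
  rewrite -[X in measurable X]setTI.
  apply: (measurable_funD (measurable_funM measurable_snd m11)
     (measurableT_comp measurable_snd measurable_fst)) => //.
have H : forall A B, measurable A -> measurable B ->
    mypush P mh (A `*` B) = mypush P mg A * law B.
  move=> A B mA mB; rewrite /mypush.
  rewrite -(@indep_sigma S j B jS mB _ (hg A mA)); congr (P _).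
have := product_measure_unique H mD.
move=> e.
have -> : [set w | (g w).1 != 0%R /\ (X j w * (g w).1 + (g w).2 = 0)%R] =
   (fun w => (g w, X j w)) @^-1` D by [].
apply/negligibleP; first by rewrite -[X in measurable X]setTI; exact: (mh measurableT D mD).
apply: (etrans (esym e)).
rewrite /product_measure1 /=.
rewrite (eq_integral (cst 0)) ?integral0 //.
move=> [u v] _; rewrite /=.
have [->|u0] := eqVneq u 0%R.
  have -> : xsection D (0%R, v) = set0.
    by apply/seteqP; split => y; rewrite /xsection /D /= inE /= ?eqxx => -[].
  exact: measure0.
have -> : xsection D (u, v) = [set (- v / u)%R].
  apply/seteqP; split => y; rewrite /xsection /D /= inE /=.
  - move=> [_ h]; apply: (mulIf u0); rewrite divfK //.
    by apply/eqP; rewrite -addr_eq0 h.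
  - by move=> ->; split => //; rewrite divfK // addNr.
exact: hatom.
Qed.

Lemma GS_mono (S1 S2 : {set I}) : S1 \subset S2 -> GS S1 `<=` GS S2.
Proof.
move=> s12 _ [B [mB ->]].
exists (fun k => if k \in S1 then B k else setT); split.
  by move=> k; case: ifP.
apply/seteqP; split => w /= h k kS.
- by case: ifP => // kS1; exact: h.
- by have := h k (fintype.subsetP s12 k kS); rewrite kS.
Qed.

Lemma sGS_mono (S1 S2 : {set I}) : S1 \subset S2 -> <<s GS S1 >> `<=` <<s GS S2 >>.
Proof.
move=> s; apply: smallest_sub; first exact: smallest_sigma_algebra.
by move=> E /(@GS_mono _ _ s) h; exact: sub_sigma_algebra.
Qed.

Definition Tg (S : {set I}) := g_sigma_algebraType (GS S).
Definition Xv (w : T) : I -> R := fun k => X k w.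

Lemma mfun_mono (S1 S2 : {set I}) (f : T -> R) : S1 \subset S2 ->
  measurable_fun (setT : set (Tg S1)) f -> measurable_fun (setT : set (Tg S2)) f.
Proof. by move=> s mf _ C mC; apply: (@sGS_mono _ _ s); exact: mf. Qed.

Lemma mX_Tg (S : {set I}) j : j \in S -> measurable_fun (setT : set (Tg S)) (X j).
Proof.
move=> jS _ C mC; apply: sub_sigma_algebra.
exists (fun k => if k == j then C else setT); split; first by move=> k; case: ifP.
apply/seteqP; split => w /=.
- by move=> [_ h] k kS; case: eqP => [->//|_].
- by move=> h; split => //; have := h j jS; rewrite eqxx.
Qed.

Lemma meas_ma n : forall (S : {set I}) (F : (I -> R) -> R), #|S| = n ->
  multiaffine F -> depends F S ->
  measurable_fun (setT : set (Tg S)) (fun w => F (Xv w)).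
Proof.
elim: n => [|n IH] S F cS hF dF.
  have S0 : S = finset.set0 by apply/eqP; rewrite -cards_eq0 cS.
  rewrite S0 in dF.
  have -> : (fun w => F (Xv w)) = cst (F (fun=> 0%R)).
    by apply/funext => w; exact: dep0.
  exact: measurable_cst.
have [j jS] : exists j, j \in S by apply/set0Pn; rewrite -card_gt0 cS.
have cS' : #|S :\ j| = n by move: cS; rewrite (cardsD1 j S) jS => -[].
have sub : S :\ j \subset S by exact: subsetDl.
have m0 := @mfun_mono _ _ _ sub (IH _ _ cS' (ma_upd j 0%R hF) (dep_upd j 0%R dF)).
have m1 := @mfun_mono _ _ _ sub (IH _ _ cS' (ma_upd j 1%R hF) (dep_upd j 1%R dF)).
have -> : (fun w => F (Xv w)) = ((fun w => F (upd (Xv w) j 0%R)) \+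
   (X j \* ((fun w => F (upd (Xv w) j 1%R)) \- (fun w => F (upd (Xv w) j 0%R)))))%R.
  by apply/funext => w /=; rewrite {1}(hF j (Xv w)).
apply: measurable_funD => //; apply: measurable_funM; first exact: mX_Tg.
exact: measurable_funB.
Qed.

Lemma zero_ma n : forall (S : {set I}) (F : (I -> R) -> R), #|S| = n ->
  multiaffine F -> depends F S -> (exists x, F x != 0%R) ->
  P.-negligible [set w | F (Xv w) = 0%R].
Proof.
elim: n => [|n IH] S F cS hF dF [x0 Fx0].
  have S0 : S = finset.set0 by apply/eqP; rewrite -cards_eq0 cS.
  rewrite S0 in dF.
  have -> : [set w | F (Xv w) = 0%R] = set0.
    apply/seteqP; split => w //= h.
    by move: Fx0; rewrite (dep0 dF x0) -(dep0 dF (Xv w)) h eqxx.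
  exact: negligible_set0.
have [j jS] : exists j, j \in S by apply/set0Pn; rewrite -card_gt0 cS.
have cS' : #|S :\ j| = n by move: cS; rewrite (cardsD1 j S) jS => -[].
have jS' : j \notin S :\ j by rewrite in_setD1 eqxx.
pose a x := (F (upd x j 1%R) - F (upd x j 0%R))%R.
have ha : multiaffine a := ma_sub (ma_upd j 1%R hF) (ma_upd j 0%R hF).
have da : depends a (S :\ j) := dep_sub (dep_upd j 1%R dF) (dep_upd j 0%R dF).
case: (pselect (exists x, a x != 0%R)) => [anz|az].
  pose g w := (a (Xv w), F (upd (Xv w) j 0%R)).
  have mg : measurable_fun (setT : set (Tg (S :\ j))) g.
    exact: (measurable_fun_pair (@meas_ma n _ _ cS' ha da)
      (@meas_ma n _ _ cS' (ma_upd j 0%R hF) (dep_upd j 0%R dF))).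
  have hg : forall C, measurable C -> <<s GS (S :\ j) >> (g @^-1` C).
    by move=> C mC; have := mg measurableT C mC; rewrite setTI.
  apply: (negligibleS _ (negligibleU (IH _ a cS' ha da anz) (@zero_step _ _ g jS' hg))).
  move=> w /= Fw; have [a0|a0] := eqVneq (a (Xv w)) 0%R; [left|right] => //.
  split => //; rewrite /g /=.
  by rewrite (hF j (Xv w)) in Fw; rewrite addrC; exact: Fw.
have az' x : a x = 0%R.
  by case: (eqVneq (a x) 0%R) => // h; case: az; exists x.
have FF0 x : F x = F (upd x j 0%R).
  by rewrite {1}(hF j x) -/(a x) az' mulr0 addr0.
have -> : [set w | F (Xv w) = 0%R] = [set w | F (upd (Xv w) j 0%R) = 0%R].
  by apply/seteqP; split => w /=; rewrite (FF0 (Xv w)).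
apply: (IH _ _ cS' (ma_upd j 0%R hF) (dep_upd j 0%R dF)).
by exists x0; rewrite -FF0.
Qed.

End indep.

Section B.
Context {R : comPzRingType} (d : nat).
Definition Bof (W : 'M[R]_(d ^ 2, d)) (V : 'M[R]_(d, d ^ 2)) : 'M[R]_(d ^ 2) :=
  \matrix_(j < d ^ 2) mxvec (col j V *m row j W).
Lemma BofE W V j (i k : 'I_d) : Bof W V j (mxvec_index i k) = V i j * W j k.
Proof.
rewrite /Bof mxE mxvecE mxE big_ord1 !mxE.
done.
Qed.
End B.
Arguments Bof {R d}. Arguments BofE {R d}.

Lemma aux_ring2 (R : comPzRingType) (a b c t : R) :
  (a + t * (b - a)) * c = a * c + t * (b * c - a * c).
Proof. ring. Qed.

Section detaff.
Context {R : comPzRingType} {I : finType} (n : nat) (M : (I -> R) -> 'M[R]_n)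
  (e : I) (r : 'I_n).
Hypotheses (hent : forall i k, multiaffine (fun x => M x i k))
  (hrow : forall x t i k, i != r -> M (upd x e t) i k = M x i k).

Lemma cof_eq x y : (forall i k, i != r -> M x i k = M y i k) ->
  forall k, cofactor (M x) r k = cofactor (M y) r k.
Proof.
move=> h k; rewrite /cofactor; congr (_ * _); congr (\det _).
by apply/matrixP => i j; rewrite !mxE; apply: h; rewrite eq_sym neq_lift.
Qed.

Lemma det_aff x : \det (M x) = \det (M (upd x e 0)) +
  x e * (\det (M (upd x e 1)) - \det (M (upd x e 0))).
Proof.
have c0 k : cofactor (M (upd x e 0)) r k = cofactor (M x) r k.
  by apply: cof_eq => i k' ir; rewrite hrow.
have c1 k : cofactor (M (upd x e 1)) r k = cofactor (M x) r k.
  by apply: cof_eq => i k' ir; rewrite hrow.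
rewrite !(expand_det_row _ r).
rewrite (_ : \sum_k M (upd x e 0) r k * cofactor (M (upd x e 0)) r k =
  \sum_k M (upd x e 0) r k * cofactor (M x) r k); last first.
  by apply: eq_bigr => k _; rewrite c0.
rewrite (_ : \sum_k M (upd x e 1) r k * cofactor (M (upd x e 1)) r k =
  \sum_k M (upd x e 1) r k * cofactor (M x) r k); last first.
  by apply: eq_bigr => k _; rewrite c1.
rewrite -sumrB mulr_sumr -big_split /=; apply: eq_bigr => k _.
by rewrite {1}(hent r k e x) aux_ring2.
Qed.
End detaff.

Lemma ma_prod {R : comPzRingType} {I : finType} (a b : I) : a != b ->
  multiaffine (fun x : I -> R => x a * x b).
Proof.
move=> ab e x /=.
have ba : b != a by rewrite eq_sym.
have [->|ea] := eqVneq e a.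
  by rewrite !upd_eq !(upd_neq _ _ _ _ ba) mul0r mul1r subr0 add0r.
have [->|eb] := eqVneq e b.
  by rewrite !upd_eq !(upd_neq _ _ _ _ ab) mulr0 mulr1 subr0 add0r mulrC.
have ae : a != e by rewrite eq_sym.
have be : b != e by rewrite eq_sym.
by rewrite !(upd_neq _ _ _ _ ae) !(upd_neq _ _ _ _ be) subrr mulr0 addr0.
Qed.


Section Fdet.
Context {R : comPzRingType} (d : nat).
Definition Wm (x : entry_idx d -> R) : 'M[R]_(d ^ 2, d) := \matrix_(j, k) x (inl (j, k)).
Definition Vm (x : entry_idx d -> R) : 'M[R]_(d, d ^ 2) := \matrix_(i, j) x (inr (i, j)).
Definition Fdet (x : entry_idx d -> R) := \det (Bof (Wm x) (Vm x)).
Definition rowof (e : entry_idx d) : 'I_(d ^ 2) :=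
  match e with inl (j, _) => j | inr (_, j) => j end.

Lemma Fdet_ma : multiaffine Fdet.
Proof.
move=> e x; apply: (@det_aff _ _ _ (fun x => Bof (Wm x) (Vm x)) e (rowof e)).
- move=> i c; case/mxvec_indexP: c => a k.
  have -> : (fun x => Bof (Wm x) (Vm x) i (mxvec_index a k)) =
            (fun x => x (inr (a, i)) * x (inl (i, k))).
    by apply/funext => y; rewrite BofE !mxE.
  exact: ma_prod.
- move=> y t i c ir; case/mxvec_indexP: c => a k; rewrite !BofE !mxE.
  case: e ir => [[j k0]|[a0 j]] /= ir.
  + have h1 : (inl (i, k) : entry_idx d) != inl (j, k0).
      by apply/eqP => -[ij _]; rewrite ij eqxx in ir.
    by rewrite !upd_neq.
  + have h1 : (inr (a, i) : entry_idx d) != inr (a0, j).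
      by apply/eqP => -[_ ij]; rewrite ij eqxx in ir.
    by rewrite !upd_neq.
Qed.

Lemma Fdet_dep : depends Fdet (finset.setT : {set entry_idx d}).
Proof.
move=> x y h; rewrite /Fdet; congr (\det (Bof _ _)); apply/matrixP => ? ?;
  by rewrite !mxE h // finset.in_setT.
Qed.
End Fdet.
Arguments Wm {R d}. Arguments Vm {R d}. Arguments Fdet {R d}. Arguments rowof {d}.

Lemma idx_inj m n (i i' : 'I_m) (k k' : 'I_n) :
  mxvec_index i k = mxvec_index i' k' -> i = i' /\ k = k'.
Proof. by rewrite /mxvec_index => /cast_ord_inj /enum_rank_inj [-> ->]. Qed.

Section Fnz.
Context {R : comNzRingType} (d : nat).
Definition x0 : entry_idx d -> R := fun e =>
  match e with
  | inl (j, k) => ([exists i : 'I_d, j == mxvec_index i k] : nat)%:R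
  | inr (i, j) => ([exists k : 'I_d, j == mxvec_index i k] : nat)%:R
  end.

Lemma Fdet_nz : exists x : entry_idx d -> R, Fdet x != 0.
Proof.
exists x0; rewrite /Fdet.
have -> : Bof (Wm x0) (Vm x0) = 1%:M.
  apply/matrixP => j c; case/mxvec_indexP: c => i k; rewrite BofE !mxE /=.
  case: (eqVneq j (mxvec_index i k)) => [->|ne].
    have -> : [exists k', mxvec_index i k == mxvec_index i k'].
      by apply/existsP; exists k.
    have -> : [exists i', mxvec_index i k == mxvec_index i' k].
      by apply/existsP; exists i.
    by rewrite mulr1.
  case: (boolP [exists k', j == mxvec_index i k']) => [/existsP [k' /eqP jk']|];
    last by rewrite mul0r.
  case: (boolP [exists i', j == mxvec_index i' k]) => [/existsP [i' /eqP ji']|];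
    last by rewrite mulr0.
  rewrite jk' in ji'; have [_ kk] := @idx_inj _ _ _ _ _ _ ji'.
  by move: ne; rewrite jk' kk eqxx.
by rewrite det1 oner_neq0.
Qed.
End Fnz.

Section net.
Context {R : realType} (d : nat).

Lemma key_vec (W : 'M[R]_(d ^ 2, d)) (V : 'M[R]_(d, d ^ 2)) (gam : 'rV[R]_(d ^ 2)) :
  mxvec (V *m diag_mx gam *m W) = gam *m Bof W V.
Proof.
apply/rowP => c; case/mxvec_indexP: c => i k.
rewrite mxvecE mul_mx_diag mulmx_sum_row summxE !mxE.
apply: eq_bigr => j _; rewrite !mxE mxvecE !mxE big_ord1 !mxE.
by rewrite mulrCA mulrA.
Qed.

Lemma solve_gam (W : 'M[R]_(d ^ 2, d)) (V : 'M[R]_(d, d ^ 2)) :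
  \det (Bof W V) != 0 -> forall M : 'M[R]_d,
  exists gam : 'rV[R]_(d ^ 2), V *m diag_mx gam *m W = M.
Proof.
move=> hdet M.
have Bu : Bof W V \in unitmx by rewrite unitmxE unitfE.
exists (mxvec M *m invmx (Bof W V)).
by apply: (can_inj mxvecK); rewrite key_vec -mulmxA mulVmx // mulmx1.

Qed.
End net.

Lemma zmod_id {R : comPzRingType} m n (A B C D E : 'M[R]_(m, n)) :
  A - B + C - D + (E + B - C + D) = A + E.
Proof. by apply/matrixP => i j; rewrite !mxE; ring. Qed.

Section net2.
Context {R : realType} (d : nat).

Lemma ball_le1 (x : 'cV[R]_d) : in_unit_ball x -> forall k, `|x k 0| <= 1.
Proof.
move=> hx k.
have h : x k 0 ^+ 2 <= 1.
  apply: le_trans hx; rewrite (bigD1 k) //= lerDl.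
  by apply: sumr_ge0 => i _; exact: sqr_ge0.
by rewrite -(expr_le1 (n:=2)) // real_normK // num_real.
Qed.

Lemma net_ok (gs : 'rV[R]_d) (Ws : 'M[R]_d) (bs : 'cV[R]_d)
  (mu : 'cV[R]_(d ^ 2)) (mu' : 'cV[R]_d) (s s' : R) (hs : s != 0) (hs' : s' != 0)
  (W : 'M[R]_(d ^ 2, d)) (V : 'M[R]_(d, d ^ 2)) (gam : 'rV[R]_(d ^ 2))
  (hg : V *m diag_mx gam *m W = diag_mx gs *m Ws) :
  let b : 'cV[R]_(d ^ 2) := \col_j (`|gam 0 j| * (\sum_k `|W j k| + `|mu j 0|)) in
  forall x, in_unit_ball x ->
  bn_net W V mu mu' s s' (s *: gam) b (const_mx s')
    (bs + V *m (diag_mx gam *m mu) - V *m b + mu') x = relu_layer gs Ws bs x.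
Proof.
move=> b x hx.
have xk := ball_le1 x hx.
have hid : relu_mx (diag_mx (s *: gam) *m (s^-1 *: (W *m x - mu)) + b) =
    diag_mx gam *m (W *m x - mu) + b.
  apply/matrixP => j z; rewrite (ord1 z) !mul_diag_mx !mxE.
  rewrite [s * _]mulrC -mulrA mulVKf //.
  set y := (W *m x) j 0 - mu j 0.
  rewrite /relu; apply/max_idPl.
  have h1 : `|gam 0 j * y| <= `|gam 0 j| * (\sum_k `|W j k| + `|mu j 0|).
    rewrite normrM ler_wpM2l //.
    apply: le_trans (ler_normB _ _) _; rewrite lerD2r.
    rewrite mxE; apply: le_trans (ler_norm_sum _ _ _) _.
    apply: ler_sum => k _; rewrite normrM -[X in _ <= X]mulr1.
    by rewrite ler_wpM2l.
  move: h1; rewrite ler_norml => /andP [h1 _].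
  by rewrite -lerBlDr sub0r; move: h1; rewrite /y mxE.
rewrite /bn_net /relu_layer hid; congr relu_mx.
rewrite diag_const_mx mul_scalar_mx scalerA mulfV // scale1r.
rewrite mulmxDr !mulmxBr !mulmxA hg.
exact: zmod_id.
Qed.
End net2.

Theorem lemma4p1 (R : realType) (d : nat)
  (gs : 'rV[R]_d) (Ws : 'M[R]_d) (bs : 'cV[R]_d)
  (mu : 'cV[R]_(d ^ 2)) (mu' : 'cV[R]_d) (s s' : R)
  (hs : s != 0) (hs' : s' != 0)
  (law : probability R R) (hlaw : continuous_bounded_law law)
  (dT : measure_display) (T : measurableType dT) (P : probability T R)
  (W : T -> 'M[R]_(d ^ 2, d)) (V : T -> 'M[R]_(d, d ^ 2))
  (hmeas : forall j, measurable_fun setT (entry_of W V j))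
  (hdist : forall j (B : set R), measurable B ->
     P (entry_of W V j @^-1` B) = law B)
  (hind : mutually_independent P (entry_of W V)) :
  {ae P, forall w : T,
    exists (g : 'rV[R]_(d ^ 2)) (b : 'cV[R]_(d ^ 2)) (g' : 'rV[R]_d) (b' : 'cV[R]_d),
      forall x : 'cV[R]_d, in_unit_ball x ->
        bn_net (W w) (V w) mu mu' s s' g b g' b' x = relu_layer gs Ws bs x}.
Proof.
have hatom := hlaw.1.
have hN := @zero_ma R dT T P law (entry_idx d) (entry_of W V) hmeas hdist hatom hind
  #|(finset.setT : {set entry_idx d})| finset.setT Fdet erefl (Fdet_ma d) (Fdet_dep d) (Fdet_nz d).
apply: (negligibleS _ hN) => w /= hw.
apply/eqP; case: eqVneq => // hnz; exfalso; apply: hw.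
have eW : Wm (Xv _ _ _ _ (entry_of W V) w) = W w by apply/matrixP => j k; rewrite mxE.
have eV : Vm (Xv _ _ _ _ (entry_of W V) w) = V w by apply/matrixP => j k; rewrite mxE.
move: hnz; rewrite /Fdet eW eV => hnz.
have [gam hg] := @solve_gam _ d _ _ hnz (diag_mx gs *m Ws).
exists (s *: gam), (\col_j (`|gam 0 j| * (\sum_k `|W w j k| + `|mu j 0|))), (const_mx s').
exists (bs + V w *m (diag_mx gam *m mu) - V w *m (\col_j (`|gam 0 j| * (\sum_k `|W w j k| + `|mu j 0|))) + mu').
exact: (@net_ok _ d _ _ _ _ _ _ _ hs hs' _ _ _ hg).
Qed.
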